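(* Let $h_N(\rho)=\tfrac12\big[(\mathrm{tr}\,\rho^{1/2})^2-1\big]$ for density matrices $\rho$ on a finite-dimensional Hilbert space; this is the reduced function of the negativity, i.e. $N(|\psi\rangle)=h_N(\mathrm{tr}_B|\psi\rangle\langle\psi|)=\sum_{i<j}\lambda_i\lambda_j$ for a pure state with Schmidt coefficients $\lambda_i$. Then $h_N$ is strictly concave: for all density matrices $\rho_1\neq\rho_2$ and $0<p<1$, $h_N(p\rho_1+(1-p)\rho_2)>p\,h_N(\rho_1)+(1-p)\,h_N(\rho_2)$.
   Context: The negativity of a bipartite state $\rho$ is $N(\rho)=\sum_i\mu_i$, where $\mu_i$ are the absolute values of the negative eigenvalues of the partial transpose $\rho^{T_A}$. *)

(* Defs.v *)
From HB Require Import structures.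
From mathcomp Require Import all_boot all_order all_algebra.
From mathcomp Require Import sesquilinear spectral.
Set Implicit Arguments. Unset Strict Implicit. Unset Printing Implicit Defensive.
Import Order.TTheory GRing.Theory Num.Theory.
Local Open Scope ring_scope.
Local Open Scope sesquilinear_scope.

Definition psdmx {C : numClosedFieldType} {n : nat} (A : 'M[C]_n) : Prop :=
  A \is hermsymmx /\ forall v : 'rV[C]_n, 0 <= (v *m A *m v ^t*) 0 0.

Definition density {C : numClosedFieldType} {n : nat} (rho : 'M[C]_n) : Prop :=
  psdmx rho /\ \tr rho = 1.

Definition sqrtmx {C : numClosedFieldType} {n : nat} (A : 'M[C]_n) : 'M[C]_n :=
  invmx (spectralmx A) *m diag_mx (map_mx (fun x : C => sqrtC x) (spectral_diag A))
    *m spectralmx A.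

Definition hN {C : numClosedFieldType} {n : nat} (rho : 'M[C]_n) : C :=
  ((\tr (sqrtmx rho)) ^+ 2 - 1) / 2.

(* Main.v *)
Require Import Defs.
From HB Require Import structures.
From mathcomp Require Import all_boot all_order all_algebra.
From mathcomp Require Import sesquilinear spectral.
Import Order.TTheory GRing.Theory Num.Theory.
Local Open Scope ring_scope.
Local Open Scope sesquilinear_scope.
Definition cg {C : numClosedFieldType} {n} (V A : 'M[C]_n) := V *m A *m V ^t*.

Lemma unit_tV {C : numClosedFieldType} {n} (V : 'M[C]_n) :
  V \is unitarymx -> V ^t* *m V = 1%:M.
Proof. by move=> U; rewrite -[V ^t*]mul1mx mulmxKtV. Qed.

Lemma cgK {C : numClosedFieldType} {n} (V A : 'M[C]_n) :
  V \is unitarymx -> V ^t* *m cg V A *m V = A.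
Proof.
move=> U; rewrite /cg !mulmxA mulmxKtV // unit_tV // mul1mx //.
Qed.

Lemma cg_entry {C : numClosedFieldType} {n} (V A : 'M[C]_n) i :
  cg V A i i = (row i V *m A *m (row i V) ^t*) 0 0.
Proof.
rewrite /cg !mxE; apply: eq_bigr => k _; rewrite !mxE.
by congr (_ * _); apply: eq_bigr => j _; rewrite mxE.
Qed.

Lemma psd_cg {C : numClosedFieldType} {n} (V A : 'M[C]_n) i :
  psdmx A -> 0 <= cg V A i i.
Proof. by move=> [_ H]; rewrite cg_entry; apply: H. Qed.

Lemma tr_cg {C : numClosedFieldType} {n} (V A : 'M[C]_n) :
  V \is unitarymx -> \tr (cg V A) = \tr A.
Proof. by move=> U; rewrite /cg mxtrace_mulC mulmxA unit_tV // mul1mx. Qed.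

Lemma cg_lin {C : numClosedFieldType} {n} (V A B : 'M[C]_n) (a b : C) :
  cg V (a *: A + b *: B) = a *: cg V A + b *: cg V B.
Proof. by rewrite /cg mulmxDr mulmxDl -!scalemxAr -!scalemxAl. Qed.

Lemma cg_spec {C : numClosedFieldType} {n} (A : 'M[C]_n) :
  A \is hermsymmx -> cg (spectralmx A) A = diag_mx (spectral_diag A).
Proof.
move=> /hermitian_normalmx /orthomx_spectralP E.
rewrite /cg {2}E invmx_unitary ?spectral_unitarymx //.
have U := spectral_unitarymx A.
by rewrite !mulmxA mulmxtVK // (unitarymxP U) mul1mx.
Qed.

Lemma spec_diag_ge0 {C : numClosedFieldType} {n} (A : 'M[C]_n) i :
  psdmx A -> 0 <= spectral_diag A 0 i.
Proof.
move=> P; have := @psd_cg _ _ (spectralmx A) A i P.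
by rewrite cg_spec ?(P.1) // mxE eqxx mulr1n.
Qed.

Lemma trC_mul {C : numClosedFieldType} {m n p} (A : 'M[C]_(m, n)) (B : 'M[C]_(n, p)) :
  (A *m B) ^t* = B ^t* *m A ^t*.
Proof. by rewrite trmx_mul map_mxM. Qed.

Lemma sqrtmxE {C : numClosedFieldType} {n} (A : 'M[C]_n) :
  sqrtmx A = (spectralmx A) ^t* *m diag_mx (map_mx (fun x : C => sqrtC x) (spectral_diag A)) *m spectralmx A.
Proof. by rewrite /sqrtmx invmx_unitary // spectral_unitarymx. Qed.

Lemma sqrtmx_herm {C : numClosedFieldType} {n} (A : 'M[C]_n) :
  psdmx A -> (sqrtmx A) ^t* = sqrtmx A.
Proof.
move=> P; rewrite sqrtmxE !trC_mul trmxCK mulmxA; congr (_ *m _ *m _).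
rewrite tr_diag_mx map_diag_mx; congr diag_mx; apply/matrixP => i j.
rewrite !mxE; apply: conj_Creal; apply: ger0_real.
by rewrite sqrtC_ge0 (ord1 i); apply: spec_diag_ge0.
Qed.

Lemma sqrtmx_sq {C : numClosedFieldType} {n} (A : 'M[C]_n) :
  A \is hermsymmx -> sqrtmx A *m sqrtmx A = A.
Proof.
move=> H; rewrite sqrtmxE.
have U := spectral_unitarymx A.
have /hermitian_normalmx /orthomx_spectralP E := H.
set V := spectralmx A; set S := diag_mx _.
have -> : V ^t* *m S *m V *m (V ^t* *m S *m V) = V ^t* *m (S *m S) *m V.
  by rewrite !mulmxA mulmxtVK.
rewrite [RHS]E invmx_unitary //; congr (_ *m _ *m _).
rewrite /S mul_diag_mx; apply/matrixP => i j; rewrite !mxE.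
by rewrite mulrnAr -expr2 sqrtCK.
Qed.

Lemma tr_sqrtmx {C : numClosedFieldType} {n} (A : 'M[C]_n) :
  \tr (sqrtmx A) = \sum_i sqrtC (spectral_diag A 0 i).
Proof.
rewrite sqrtmxE mxtrace_mulC mulmxA (unitarymxP (spectral_unitarymx A)) mul1mx.
by rewrite mxtrace_diag; apply: eq_bigr => i _; rewrite mxE.
Qed.
From mathcomp Require Import ring.
Lemma key {C : numClosedFieldType} {n} (B : 'M[C]_n) (t : 'I_n -> C) :
  B ^t* = B -> (forall i, 0 <= t i) -> 0 < \sum_i t i ->
  (forall i, t i = 0 -> (B *m B) i i = 0) ->
  0 <= (\sum_i t i) * (\sum_i (B *m B) i i / t i) - (\tr B) ^+ 2 /\
  ((\sum_i t i) * (\sum_i (B *m B) i i / t i) - (\tr B) ^+ 2 = 0 ->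
     forall i j, B i j = (i == j)%:R * ((\tr B / \sum_k t k) * t i)).
Proof.
move=> HB t0 tpos tz.
have hB i j : (B j i)^* = B i j.
  by rewrite -{2}HB !mxE.
set tau := \sum_i t i.
have tau0 : tau != 0 by rewrite gt_eqF.
have qE i : (B *m B) i i = \sum_k `|B i k| ^+ 2.
  by rewrite mxE; apply: eq_bigr => k _; rewrite normCK hB.
set off := fun i => \sum_(k | k != i) `|B i k| ^+ 2.
have off0 i : 0 <= off i by apply: sumr_ge0 => k _; rewrite exprn_ge0.
have breal i : B i i \is Num.real by apply/CrealP; rewrite hB.
have qsplit i : (B *m B) i i = B i i ^+ 2 + off i.
  by rewrite qE (bigD1 i) //= real_normK.
have bz i : t i = 0 -> B i i = 0.
  move=> /tz; rewrite qsplit -real_normK // => /eqP.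
  rewrite paddr_eq0 ?exprn_ge0 // => /andP[/eqP] /eqP.
  by rewrite expf_eq0 /= normr_eq0 => /eqP.
set SB := \tr B.
have SBr : SB \is Num.real by apply: rpred_sum => i _.
set c := SB / tau.
have cr : c \is Num.real.
  by rewrite /c rpredM // rpredV ger0_real // ltW.
set e := fun i => (B i i - c * t i) ^+ 2 / t i.
have e0 i : 0 <= e i.
  apply: divr_ge0 => //; apply: real_exprn_even_ge0 => //.
  by rewrite rpredB // rpredM // ger0_real.
have term i : (B *m B) i i / t i = off i / t i + e i + (2 * c) * B i i - c ^+ 2 * t i.
  rewrite qsplit /e; have [ti0|tin0] := eqVneq (t i) 0.
    rewrite ti0 (bz i ti0) !invr0; ring.
  by field.
have hsum : \sum_i (B *m B) i i / t i =
    \sum_i off i / t i + \sum_i e i + (2 * c) * SB - c ^+ 2 * tau.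
  rewrite (eq_bigr _ (fun i _ => term i)) !big_split /= sumrN -!mulr_sumr.
  by [].
have sE : tau * (\sum_i (B *m B) i i / t i) - SB ^+ 2 =
    tau * (\sum_i off i / t i) + tau * \sum_i e i.
  rewrite hsum /c; field; exact: tau0.
have X0 : 0 <= \sum_i off i / t i by apply: sumr_ge0 => i _; apply: divr_ge0.
have Y0 : 0 <= \sum_i e i by apply: sumr_ge0 => i _.
rewrite sE; split.
  by apply: addr_ge0; apply: mulr_ge0 => //; apply: ltW.
move=> /eqP; rewrite paddr_eq0; first last.
- by apply: mulr_ge0 => //; apply: ltW.
- by apply: mulr_ge0 => //; apply: ltW.
rewrite !mulf_eq0 (negbTE tau0) /=.
move=> /andP[/eqP Xz /eqP Yz] i j.
have Bi0 : t i = 0 -> B i j = 0.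
  move=> /tz; rewrite qE => /psumr_eq0P H.
  have /eqP := @H (fun k _ => exprn_ge0 2 (normr_ge0 (B i k))) j isT.
  by rewrite expf_eq0 /= normr_eq0 => /eqP.
have [ti0|tin0] := eqVneq (t i) 0.
  by rewrite Bi0 // ti0 !mulr0.
have offz : off i = 0.
  have := psumr_eq0P (fun k _ => divr_ge0 (off0 k) (t0 k)) Xz (i:=i) isT.
  by move=> /eqP; rewrite mulf_eq0 invr_eq0 (negbTE tin0) orbF => /eqP.
have ez : B i i = c * t i.
  have := psumr_eq0P (fun k _ => e0 k) Yz (i:=i) isT.
  move=> /eqP; rewrite /e mulf_eq0 invr_eq0 (negbTE tin0) orbF expf_eq0 /=.
  by rewrite subr_eq0 => /eqP.
have [<-|nij] := eqVneq i j; first by rewrite ez mul1r.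
rewrite mul0r.
have H := psumr_eq0P (fun k _ => exprn_ge0 2 (normr_ge0 (B i k))) offz (i:=j).
have nji : j != i by rewrite eq_sym.
have /eqP := H nji.
by rewrite expf_eq0 /= normr_eq0 => /eqP.
Qed.

Lemma psd_herm {C : numClosedFieldType} {n} (A : 'M[C]_n) : psdmx A -> A ^t* = A.
Proof. by move=> [/is_hermitianmxP H _]; rewrite {2}H expr0 scale1r. Qed.

Lemma cg_herm {C : numClosedFieldType} {n} (V A : 'M[C]_n) : A ^t* = A -> (cg V A) ^t* = cg V A.
Proof. by move=> H; rewrite /cg !trC_mul trmxCK H mulmxA. Qed.

Lemma cg_mul {C : numClosedFieldType} {n} (V A B : 'M[C]_n) :
  V \is unitarymx -> cg V A *m cg V B = cg V (A *m B).
Proof.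
move=> U; rewrite /cg !mulmxA mulmxKtV //.
Qed.

Lemma eq_case {C : numClosedFieldType} {n} (V B rho sig : 'M[C]_n) (t : 'I_n -> C) (c : C) :
  V \is unitarymx -> (forall i j, B i j = (i == j)%:R * (c * t i)) ->
  B *m B = cg V rho -> \tr rho = 1 -> \sum_i t i ^+ 2 = 1 ->
  cg V sig = diag_mx (\row_i (t i ^+ 2)) -> rho = sig.
Proof.
move=> U HB BB tr1 st1 hs.
have BE : B = diag_mx (\row_i (c * t i)).
  by apply/matrixP => i j; rewrite HB !mxE mulr_natl.
have hr : cg V rho = c ^+ 2 *: diag_mx (\row_i (t i ^+ 2)).
  rewrite -BB BE mulmx_diag; apply/matrixP => i j; rewrite !mxE.
  by case: (i == j); rewrite ?mulr1n ?mulr0n ?mulr0 //; ring.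
have c2 : c ^+ 2 = 1.
  have : \tr (cg V rho) = c ^+ 2.
    rewrite hr mxtraceZ mxtrace_diag (eq_bigr (fun i => t i ^+ 2)) ?st1 ?mulr1 //.
    by move=> i _; rewrite mxE.
  by rewrite tr_cg // tr1.
by rewrite -(@cgK _ _ V rho U) -(@cgK _ _ V sig U) hr hs c2 scale1r.
Qed.

Theorem mainTheorem3 (C : numClosedFieldType) (n : nat)
  (rho1 rho2 : 'M[C]_n) (p : C) :
  density rho1 -> density rho2 -> rho1 != rho2 ->
  0 < p -> p < 1 ->
  p * hN rho1 + (1 - p) * hN rho2 < hN (p *: rho1 + (1 - p) *: rho2).
Proof.
move=> [P1 T1] [P2 T2] neq p0 p1.
have q0 : 0 < 1 - p by rewrite subr_gt0.
set q := 1 - p in q0 *.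
set sig := p *: rho1 + q *: rho2.
have pr : p^* = p by apply: conj_Creal; apply: ger0_real; apply: ltW.
have qr : q^* = q by apply: conj_Creal; apply: ger0_real; apply: ltW.
have H1 := psd_herm rho1 P1; have H2 := psd_herm rho2 P2.
have Hs : sig \is hermsymmx.
  apply/is_hermitianmxP; rewrite expr0 scale1r.
  apply/matrixP => i j; rewrite !mxE.
  have E1 : rho1 i j = (rho1 j i)^* by rewrite -{1}H1 !mxE.
  have E2 : rho2 i j = (rho2 j i)^* by rewrite -{1}H2 !mxE.
  by rewrite E1 E2 -{1}pr -{1}qr -!rmorphM -rmorphD.
set V := spectralmx sig.
have U : V \is unitarymx := spectral_unitarymx sig.
set d := spectral_diag sig.
have cgs := cg_spec sig Hs.
set q1 := fun i => cg V rho1 i i.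
set q2 := fun i => cg V rho2 i i.
have q10 i : 0 <= q1 i := psd_cg V rho1 i P1.
have q20 i : 0 <= q2 i := psd_cg V rho2 i P2.
have dE i : d 0 i = p * q1 i + q * q2 i.
  have := congr1 (fun M : 'M[C]_n => M i i) cgs.
  rewrite /= cg_lin !mxE eqxx mulr1n => <-.
  by rewrite /q1 /q2 /cg !mxE.
have d0 i : 0 <= d 0 i by rewrite dE addr_ge0 // mulr_ge0 // ltW.
set t := fun i => sqrtC (d 0 i).
have t0 i : 0 <= t i by rewrite sqrtC_ge0.
have t2 i : t i ^+ 2 = d 0 i by rewrite sqrtCK.
have sd : \sum_i d 0 i = 1.
  have := tr_cg V sig U; rewrite cgs mxtrace_diag => ->.
  by rewrite mxtraceD !mxtraceZ T1 T2 !mulr1 /q addrC subrK.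
set tau := \sum_i t i.
have taupos : 0 < tau.
  rewrite lt_def sumr_ge0 // andbT; apply/eqP => tz.
  have := psumr_eq0P (fun i _ => t0 i) tz.
  move=> H; move: sd; rewrite big1 ?oner_eq0 //; first by move=> /esym/eqP; rewrite oner_eq0.
  by move=> i _; rewrite -t2 (H i isT) expr0n.
have tz i : t i = 0 -> q1 i = 0 /\ q2 i = 0.
  move=> ti; have /eqP : d 0 i = 0 by rewrite -t2 ti expr0n.
  rewrite dE paddr_eq0 ?(mulr_ge0 (ltW p0)) ?(mulr_ge0 (ltW q0)) // !mulf_eq0 (gt_eqF p0) (gt_eqF q0) /=.
  by move=> /andP[/eqP -> /eqP ->].
set R1 := sqrtmx rho1; set R2 := sqrtmx rho2.
set B1 := cg V R1; set B2 := cg V R2.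
have B1h : B1 ^t* = B1 by apply: cg_herm; apply: sqrtmx_herm.
have B2h : B2 ^t* = B2 by apply: cg_herm; apply: sqrtmx_herm.
have B1B : B1 *m B1 = cg V rho1 by rewrite cg_mul // sqrtmx_sq // P1.1.
have B2B : B2 *m B2 = cg V rho2 by rewrite cg_mul // sqrtmx_sq // P2.1.
have [s1ge s1eq] := key B1 t B1h t0 taupos (fun i ti => etrans (congr1 (fun M : 'M[C]_n => M i i) B1B) (tz i ti).1).
have [s2ge s2eq] := key B2 t B2h t0 taupos (fun i ti => etrans (congr1 (fun M : 'M[C]_n => M i i) B2B) (tz i ti).2).
rewrite B1B B2B !tr_cg // in s1ge s1eq s2ge s2eq.
have sdt : \sum_i d 0 i / t i = tau.
  apply: eq_bigr => i _; rewrite -t2; have [->|ti0] := eqVneq (t i) 0.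
    by rewrite expr0n /= mul0r.
  by rewrite expr2 mulfK.
set S1 := \sum_i cg V rho1 i i / t i.
set S2 := \sum_i cg V rho2 i i / t i.
have hL : tau * tau = p * (tau * S1) + q * (tau * S2).
  rewrite -{2}sdt (eq_bigr (fun i => p * (cg V rho1 i i / t i) + q * (cg V rho2 i i / t i))).
    by rewrite big_split /= -!mulr_sumr /S1 /S2; ring.
  by move=> i _; rewrite dE mulrDl !mulrA.
have st1 : \sum_i t i ^+ 2 = 1 by rewrite -sd; apply: eq_bigr => i _; rewrite t2.
have hs : cg V sig = diag_mx (\row_i (t i ^+ 2)).
  by rewrite cgs; congr diag_mx; apply/rowP => i; rewrite !mxE t2.
have e1 : tau * S1 - \tr R1 ^+ 2 = 0 -> rho1 = sig.
  by move=> /s1eq H; exact: (@eq_case _ _ V B1 rho1 sig t _ U H B1B T1 st1 hs).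
have e2 : tau * S2 - \tr R2 ^+ 2 = 0 -> rho2 = sig.
  by move=> /s2eq H; exact: (@eq_case _ _ V B2 rho2 sig t _ U H B2B T2 st1 hs).
rewrite -subr_gt0.
have -> : hN sig - (p * hN rho1 + q * hN rho2) =
    (p * (tau * S1 - \tr R1 ^+ 2) + q * (tau * S2 - \tr R2 ^+ 2)) / 2.
  rewrite /hN -/R1 -/R2 tr_sqrtmx -/tau expr2 hL /q; ring.
apply: divr_gt0; last by rewrite ltr0n.
have g1 : 0 <= p * (tau * S1 - \tr R1 ^+ 2) by apply: mulr_ge0 => //; apply: ltW.
have g2 : 0 <= q * (tau * S2 - \tr R2 ^+ 2) by apply: mulr_ge0 => //; apply: ltW.
rewrite lt_def addr_ge0 // andbT paddr_eq0 // !mulf_eq0 (gt_eqF p0) (gt_eqF q0) /=.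
apply/negP => /andP[/eqP /e1 E1 /eqP /e2 E2].
by move: neq; rewrite E1 E2 eqxx.
Qed.
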